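(* Let $G=(V,q)$ be a reversible, stochastically complete graph and let $\widetilde G=(V\times V,\widetilde q)$ be a coupling graph of $G$ with heat semigroup $\widetilde P_t$. Let $W:=V^2\setminus\{(x,x):x\in V\}$ and suppose $\widetilde P_t1_W\to0$ pointwise as $t\to\infty$. Then every bounded function $\phi:V\to\mathbb R$ with $\Delta\phi=0$ is constant.
   Context: A graph $G=(V,q)$ consists of a countable set $V$ and a function $q:V\times V\to[0,\infty)$ such that $\#\{y:q(x,y)>0\}<\infty$ for every $x\in V$; its Laplacian is $\Delta f(x)=\sum_y q(x,y)(f(y)-f(x))$. $G$ is reversible if there is $m:V\to(0,\infty)$ with $q(x,y)m(x)=q(y,x)m(y)$. Heat semigroup of any graph: for finite $S$ let $q_S(x,y)=q(x,y)1_S(x)$ with Laplacian $\Delta_S$ and $P^S_tf=\sum_{k\ge0}t^k\Delta_S^k(f1_S)/k!$; for bounded $f$, $P_tf=\lim_iP_t^{S_i}f$ pointwise along any increasing exhaustion by finite sets. $G$ is stochastically complete if $P_t1=1$ for all $t\ge0$. $(f\otimes g)(x,y)=f(x)g(y)$. A coupling graph of $G$ is a graph $\widetilde G=(V\times V,\widetilde q)$ whose Laplacian satisfies $\widetilde\Delta(f\otimes 1)=\Delta f\otimes 1$ and $\widetilde\Delta(1\otimes f)=1\otimes\Delta f$ for all $f:V\to\mathbb R$. *)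

(* Defs.v *)
From Stdlib Require Import Reals Lra Arith Factorial List Classical ClassicalEpsilon.
Import ListNotations.
Open Scope R_scope.

(* A graph G = (V,q) is represented by q : V -> V -> R together with, for
   each x, a duplicate-free list nb x containing every y with q x y > 0
   (this witnesses local finiteness; entries with q x y = 0 are allowed and
   contribute nothing to sums).  V is countable: it injects into nat. *)
Definition is_graph {V : Type} (q : V -> V -> R) (nb : V -> list V) : Prop :=
  (exists e : V -> nat, forall x y, e x = e y -> x = y) /\
  (forall x y, 0 <= q x y) /\
  (forall x, NoDup (nb x)) /\
  (forall x y, 0 < q x y -> In y (nb x)).

Definition lap {V : Type} (q : V -> V -> R) (nb : V -> list V)
  (f : V -> R) (x : V) : R :=
  fold_right (fun y acc => q x y * (f y - f x) + acc) 0 (nb x).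

Definition reversible {V : Type} (q : V -> V -> R) : Prop :=
  exists m : V -> R, (forall x, 0 < m x) /\
    (forall x y, q x y * m x = q y x * m y).

Definition ind {V : Type} (S : list V) (x : V) : R :=
  if excluded_middle_informative (In x S) then 1 else 0.

(* Laplacian of q_S(x,y) = q(x,y) 1_S(x) *)
Definition lapS {V : Type} (q : V -> V -> R) (nb : V -> list V)
  (S : list V) (g : V -> R) (x : V) : R :=
  ind S x * lap q nb g x.

(* k-th term of P^S_t f (x) = sum_k t^k Delta_S^k (f 1_S)(x) / k! *)
Definition heat_term {V : Type} (q : V -> V -> R) (nb : V -> list V)
  (S : list V) (t : R) (f : V -> R) (x : V) (k : nat) : R :=
  t ^ k / INR (fact k) * Nat.iter k (lapS q nb S) (fun y => ind S y * f y) x.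

Definition exhaustion {V : Type} (E : nat -> list V) : Prop :=
  (forall i y, In y (E i) -> In y (E (Datatypes.S i))) /\
  (forall y, exists i, In y (E i)).

(* heat q nb t f x l  :<->  (P_t f)(x) = l, i.e. along every increasing
   exhaustion (E_i) by finite sets, P^{E_i}_t f (x) -> l. *)
Definition heat {V : Type} (q : V -> V -> R) (nb : V -> list V)
  (t : R) (f : V -> R) (x : V) (l : R) : Prop :=
  forall E : nat -> list V, exhaustion E ->
    exists a : nat -> R,
      (forall i, infinite_sum (heat_term q nb (E i) t f x) (a i)) /\
      Un_cv a l.

Definition stoch_complete {V : Type} (q : V -> V -> R) (nb : V -> list V) : Prop :=
  forall t x, 0 <= t -> heat q nb t (fun _ => 1) x 1.

Definition is_coupling {V : Type} (q : V -> V -> R) (nb : V -> list V)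
  (qt : V * V -> V * V -> R) (nbt : V * V -> list (V * V)) : Prop :=
  is_graph qt nbt /\
  forall (f : V -> R) (x y : V),
    lap qt nbt (fun z => f (fst z)) (x, y) = lap q nb f x /\
    lap qt nbt (fun z => f (snd z)) (x, y) = lap q nb f y.

Definition offdiag {V : Type} (z : V * V) : R :=
  if excluded_middle_informative (fst z = snd z) then 0 else 1.

(* Main.v *)
Require Import Defs.
From Stdlib Require Import Reals List.
From Stdlib Require Import Lra Lia Psatz FunctionalExtensionality Classical ClassicalEpsilon.
From Coquelicot Require Import Coquelicot.
Require Import Defs.
Import ListNotations.
Local Notation ind := Defs.ind.
Local Notation fact := Factorial.fact.
Open Scope R_scope.

Definition deg {X : Type} (q : X -> X -> R) (nb : X -> list X) (x : X) : R :=
  fold_right (fun y acc => q x y + acc) 0 (nb x).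

Definition Nop {X : Type} (q : X -> X -> R) (nb : X -> list X) (S : list X) (c : R)
  (g : X -> R) : X -> R := fun x => g x + lapS q nb S g x / c.

Lemma lap_plus {X} (q : X -> X -> R) nb g h x :
  lap q nb (fun y => g y + h y) x = lap q nb g x + lap q nb h x.
Proof. unfold lap; induction (nb x) as [|y l IH]; simpl; [lra| rewrite IH; ring]. Qed.

Lemma lap_scal {X} (q : X -> X -> R) nb a g x :
  lap q nb (fun y => a * g y) x = a * lap q nb g x.
Proof. unfold lap; induction (nb x) as [|y l IH]; simpl; [lra| rewrite IH; ring]. Qed.

Lemma lap_const {X} (q : X -> X -> R) nb a x : lap q nb (fun _ => a) x = 0.
Proof. unfold lap; induction (nb x) as [|y l IH]; simpl; [lra| rewrite IH; ring]. Qed.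

Lemma lap_minus {X} (q : X -> X -> R) nb g h x :
  lap q nb (fun y => g y - h y) x = lap q nb g x - lap q nb h x.
Proof. unfold lap; induction (nb x) as [|y l IH]; simpl; [lra| rewrite IH; ring]. Qed.

Lemma lap_decomp {X} (q : X -> X -> R) nb g x :
  lap q nb g x = fold_right (fun y acc => q x y * g y + acc) 0 (nb x) - deg q nb x * g x.
Proof. unfold lap, deg; induction (nb x) as [|y l IH]; simpl; [lra| rewrite IH; ring]. Qed.

Lemma fold_nonneg {X} (f : X -> R) (l : list X) :
  (forall y, 0 <= f y) -> 0 <= fold_right (fun y acc => f y + acc) 0 l.
Proof. intros H; induction l; simpl; [lra|]. specialize (H a); lra. Qed.

Lemma fold_ge {X} (f : X -> R) (l : list X) x :
  (forall y, 0 <= f y) -> In x l -> f x <= fold_right (fun y acc => f y + acc) 0 l.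
Proof.
  intros H Hin; induction l as [|a l IH]; simpl in *; [tauto|].
  destruct Hin as [<-|Hin].
  - pose proof (fold_nonneg f l H); lra.
  - specialize (IH Hin); specialize (H a); lra.
Qed.

Lemma deg_nonneg {X} (q : X -> X -> R) nb x : (forall a b, 0 <= q a b) -> 0 <= deg q nb x.
Proof. intros H; unfold deg; induction (nb x); simpl; [lra|]. specialize (H x a); lra. Qed.

Lemma lap_bound {X} (q : X -> X -> R) nb h B x :
  (forall a b, 0 <= q a b) -> (forall y, Rabs (h y) <= B) ->
  Rabs (lap q nb h x) <= 2 * B * deg q nb x.
Proof.
  intros Hq Hh; unfold lap, deg; induction (nb x) as [|y l IH]; simpl.
  - rewrite Rabs_R0; lra.
  - pose proof (Hq x y). pose proof (Hh y). pose proof (Hh x).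
    eapply Rle_trans; [apply Rabs_triang|].
    rewrite Rabs_mult, (Rabs_right (q x y)) by lra.
    assert (Rabs (h y - h x) <= 2 * B).
    { unfold Rminus; eapply Rle_trans; [apply Rabs_triang|]. rewrite Rabs_Ropp; lra. }
    nra.
Qed.

Lemma lap_pos_sum {X} (q : X -> X -> R) nb k x :
  (forall a b, 0 <= q a b) -> (forall y, 0 <= k y) ->
  0 <= fold_right (fun y acc => q x y * k y + acc) 0 (nb x).
Proof.
  intros Hq Hk; induction (nb x); simpl; [lra|].
  pose proof (Hq x a); pose proof (Hk a); nra.
Qed.

Lemma ind_cases {X} (S : list X) x : (In x S /\ ind S x = 1) \/ (~ In x S /\ ind S x = 0).
Proof. unfold ind; destruct (excluded_middle_informative (In x S)); auto. Qed.

Lemma ind_in {X} (S : list X) x : In x S -> ind S x = 1.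
Proof. unfold ind; destruct (excluded_middle_informative (In x S)); tauto. Qed.
Lemma ind_nin {X} (S : list X) x : ~ In x S -> ind S x = 0.
Proof. unfold ind; destruct (excluded_middle_informative (In x S)); tauto. Qed.

Definition Niter {X : Type} (q : X -> X -> R) (nb : X -> list X) (S : list X) (c : R)
  (n : nat) (g : X -> R) : X -> R := Nat.iter n (Nop q nb S c) g.

Lemma Nop_plus {X} (q : X -> X -> R) nb S c g h x :
  Nop q nb S c (fun y => g y + h y) x = Nop q nb S c g x + Nop q nb S c h x.
Proof. unfold Nop, lapS; rewrite lap_plus; unfold Rdiv; ring. Qed.
Lemma Nop_minus {X} (q : X -> X -> R) nb S c g h x :
  Nop q nb S c (fun y => g y - h y) x = Nop q nb S c g x - Nop q nb S c h x.
Proof. unfold Nop, lapS; rewrite lap_minus; unfold Rdiv; ring. Qed.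
Lemma Nop_scal {X} (q : X -> X -> R) nb S c a g x :
  Nop q nb S c (fun y => a * g y) x = a * Nop q nb S c g x.
Proof. unfold Nop, lapS; rewrite lap_scal; unfold Rdiv; ring. Qed.
Lemma Nop_const {X} (q : X -> X -> R) nb S c a x :
  Nop q nb S c (fun _ => a) x = a.
Proof. unfold Nop, lapS; rewrite lap_const; unfold Rdiv; ring. Qed.

Lemma Niter_S {X} (q : X -> X -> R) nb S c n g :
  Niter q nb S c (Datatypes.S n) g = Nop q nb S c (Niter q nb S c n g).
Proof. reflexivity. Qed.

Lemma Niter_plus {X} (q : X -> X -> R) nb S c n g h x :
  Niter q nb S c n (fun y => g y + h y) x = Niter q nb S c n g x + Niter q nb S c n h x.
Proof.
  revert x; induction n as [|n IH]; intro x; [reflexivity|].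
  rewrite !Niter_S.
  replace (Niter q nb S c n (fun y => g y + h y)) with
    (fun y => Niter q nb S c n g y + Niter q nb S c n h y)
    by (apply functional_extensionality; intro; rewrite IH; reflexivity).
  apply Nop_plus.
Qed.
Lemma Niter_minus {X} (q : X -> X -> R) nb S c n g h x :
  Niter q nb S c n (fun y => g y - h y) x = Niter q nb S c n g x - Niter q nb S c n h x.
Proof.
  revert x; induction n as [|n IH]; intro x; [reflexivity|].
  rewrite !Niter_S.
  replace (Niter q nb S c n (fun y => g y - h y)) with
    (fun y => Niter q nb S c n g y - Niter q nb S c n h y)
    by (apply functional_extensionality; intro; rewrite IH; reflexivity).
  apply Nop_minus.
Qed.
Lemma Niter_scal {X} (q : X -> X -> R) nb S c n a g x :
  Niter q nb S c n (fun y => a * g y) x = a * Niter q nb S c n g x.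
Proof.
  revert x; induction n as [|n IH]; intro x; [reflexivity|].
  rewrite !Niter_S.
  replace (Niter q nb S c n (fun y => a * g y)) with
    (fun y => a * Niter q nb S c n g y)
    by (apply functional_extensionality; intro; rewrite IH; reflexivity).
  apply Nop_scal.
Qed.
Lemma Niter_const {X} (q : X -> X -> R) nb S c n a x :
  Niter q nb S c n (fun _ => a) x = a.
Proof.
  revert x; induction n as [|n IH]; intro x; [reflexivity|].
  rewrite !Niter_S.
  replace (Niter q nb S c n (fun _ => a)) with (fun _ : X => a)
    by (apply functional_extensionality; intro; rewrite IH; reflexivity).
  apply Nop_const.
Qed.

Definition good_c {X} (q : X -> X -> R) nb (S : list X) (c : R) : Prop :=
  0 < c /\ (forall x, In x S -> deg q nb x <= c).

Lemma Nop_pos {X} (q : X -> X -> R) nb S c k x :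
  (forall a b, 0 <= q a b) -> good_c q nb S c -> (forall y, 0 <= k y) ->
  0 <= Nop q nb S c k x.
Proof.
  intros Hq [Hc Hd] Hk. unfold Nop, lapS.
  destruct (ind_cases S x) as [[Hin ->]|[_ ->]].
  - rewrite lap_decomp. specialize (Hd x Hin).
    pose proof (lap_pos_sum q nb k x Hq Hk). pose proof (Hk x).
    set (s := fold_right _ _ _) in *.
    assert (k x + 1 * (s - deg q nb x * k x) / c = k x * (1 - deg q nb x / c) + s / c)
      by (field; lra). rewrite H1.
    assert (0 <= 1 - deg q nb x / c).
    { assert (deg q nb x / c <= 1); [|lra].
      apply (Rmult_le_reg_r c); [lra|]. unfold Rdiv; rewrite Rmult_assoc, Rinv_l by lra. lra. }
    assert (0 <= s / c) by (unfold Rdiv; apply Rmult_le_pos; [lra| apply Rlt_le, Rinv_0_lt_compat; lra]).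
    nra.
  - specialize (Hk x); unfold Rdiv; lra.
Qed.

Lemma Niter_pos {X} (q : X -> X -> R) nb S c n k x :
  (forall a b, 0 <= q a b) -> good_c q nb S c -> (forall y, 0 <= k y) ->
  0 <= Niter q nb S c n k x.
Proof.
  intros Hq Hc Hk; revert x; induction n as [|n IH]; intro x; [apply Hk|].
  rewrite Niter_S; apply Nop_pos; auto.
Qed.

Lemma Niter_mono {X} (q : X -> X -> R) nb S c n g h x :
  (forall a b, 0 <= q a b) -> good_c q nb S c -> (forall y, g y <= h y) ->
  Niter q nb S c n g x <= Niter q nb S c n h x.
Proof.
  intros Hq Hc Hgh.
  pose proof (Niter_pos q nb S c n (fun y => h y - g y) x Hq Hc).
  rewrite Niter_minus in H. assert (forall y, 0 <= h y - g y) by (intro y; specialize (Hgh y); lra).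
  specialize (H H0); lra.
Qed.


Definition Liter {X : Type} (q : X -> X -> R) (nb : X -> list X) (S : list X)
  (n : nat) (g : X -> R) : X -> R := Nat.iter n (lapS q nb S) g.

Lemma lapS_plus {X} (q : X -> X -> R) nb S g h x :
  lapS q nb S (fun y => g y + h y) x = lapS q nb S g x + lapS q nb S h x.
Proof. unfold lapS; rewrite lap_plus; ring. Qed.
Lemma lapS_scal {X} (q : X -> X -> R) nb S a g x :
  lapS q nb S (fun y => a * g y) x = a * lapS q nb S g x.
Proof. unfold lapS; rewrite lap_scal; ring. Qed.

Lemma lapS_sum {X} (q : X -> X -> R) nb S (a : nat -> R) (F : nat -> X -> R) n x :
  lapS q nb S (fun y => sum_f_R0 (fun k => a k * F k y) n) x =
  sum_f_R0 (fun k => a k * lapS q nb S (F k) x) n.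
Proof.
  revert x; induction n as [|n IH]; intro x; simpl.
  - apply lapS_scal.
  - rewrite lapS_plus, IH, lapS_scal; reflexivity.
Qed.

Lemma lapS_bound {X} (q : X -> X -> R) nb S c h B x :
  (forall a b, 0 <= q a b) -> good_c q nb S c -> (forall y, Rabs (h y) <= B) ->
  Rabs (lapS q nb S h x) <= 2 * c * B.
Proof.
  intros Hq [Hc Hd] Hh. pose proof (Rle_trans _ _ _ (Rabs_pos (h x)) (Hh x)) as HB.
  unfold lapS. destruct (ind_cases S x) as [[Hin ->]|[_ ->]].
  - rewrite Rmult_1_l. eapply Rle_trans; [apply lap_bound; eauto|].
    specialize (Hd x Hin). nra.
  - rewrite Rmult_0_l, Rabs_R0. nra.
Qed.

Lemma Liter_bound {X} (q : X -> X -> R) nb S c g G n x :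
  (forall a b, 0 <= q a b) -> good_c q nb S c -> (forall y, Rabs (g y) <= G) ->
  Rabs (Liter q nb S n g x) <= (2 * c) ^ n * G.
Proof.
  intros Hq Hc Hg; revert x; induction n as [|n IH]; intro x; simpl.
  - rewrite Rmult_1_l; apply Hg.
  - rewrite Rmult_assoc. apply lapS_bound; auto.
Qed.

Fixpoint bin (n k : nat) : nat :=
  match n, k with
  | _, O => 1%nat
  | O, Datatypes.S _ => 0%nat
  | Datatypes.S n', Datatypes.S k' => (bin n' k' + bin n' (Datatypes.S k'))%nat
  end.

Lemma bin_0 n : bin n 0 = 1%nat. Proof. destruct n; reflexivity. Qed.
Lemma bin_gt n k : (n < k)%nat -> bin n k = 0%nat.
Proof.
  revert k; induction n as [|n IH]; intros k Hk; destruct k; try lia; simpl; [reflexivity|].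
  rewrite !IH by lia; reflexivity.
Qed.

Lemma bin_fact n k : (k <= n)%nat -> (bin n k * fact k * fact (n - k) = fact n)%nat.
Proof.
  revert k; induction n as [|n IH]; intros k Hk.
  - destruct k; [reflexivity| lia].
  - destruct k as [|k].
    + rewrite bin_0; simpl (fact 0); rewrite Nat.sub_0_r; lia.
    + simpl bin. replace (Datatypes.S n - Datatypes.S k)%nat with (n - k)%nat by lia.
      change (fact (Datatypes.S k)) with (Datatypes.S k * fact k)%nat.
      change (fact (Datatypes.S n)) with (Datatypes.S n * fact n)%nat.
      destruct (Nat.eq_dec k n) as [->|Hkn].
      * rewrite (bin_gt n (Datatypes.S n)) by lia. pose proof (IH n (le_n n)).
        rewrite Nat.sub_diag in *. simpl (fact 0) in *. nia.
      * pose proof (IH k ltac:(lia)) as H1. pose proof (IH (Datatypes.S k) ltac:(lia)) as H2.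
        replace (n - k)%nat with (Datatypes.S (n - Datatypes.S k)) in * by lia.
        change (fact (Datatypes.S (n - Datatypes.S k))) with
          (Datatypes.S (n - Datatypes.S k) * fact (n - Datatypes.S k))%nat in *.
        change (fact (Datatypes.S k)) with (Datatypes.S k * fact k)%nat in H2.
        replace (Datatypes.S (n - Datatypes.S k)) with (n - k)%nat in * by lia.
        generalize dependent (fact (n - Datatypes.S k)); generalize dependent (fact k);
        generalize dependent (fact n); intros. nia.
Qed.

Definition fco (c : R) (n k : nat) : R := INR (bin n k) * c ^ (n - k).

Lemma fco_rec c n k : fco c (Datatypes.S n) (Datatypes.S k) = c * fco c n (Datatypes.S k) + fco c n k.
Proof.
  unfold fco. simpl bin. rewrite plus_INR.
  replace (Datatypes.S n - Datatypes.S k)%nat with (n - k)%nat by lia.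
  destruct (Compare_dec.le_lt_dec (Datatypes.S k) n) as [Hle|Hlt].
  - replace (n - k)%nat with (Datatypes.S (n - Datatypes.S k)) by lia. simpl. ring.
  - rewrite (bin_gt n (Datatypes.S k)) by lia. simpl. ring.
Qed.

Lemma sum_decomp (u : nat -> R) n :
  sum_f_R0 u (Datatypes.S n) = u 0%nat + sum_f_R0 (fun k => u (Datatypes.S k)) n.
Proof. induction n as [|n IH]; simpl in *; [ring|]. rewrite IH; ring. Qed.

Lemma sum_plus' (u v : nat -> R) n : sum_f_R0 (fun k => u k + v k) n = sum_f_R0 u n + sum_f_R0 v n.
Proof. induction n; simpl; [ring|]. rewrite IHn; ring. Qed.
Lemma sum_scal' (a : R) (u : nat -> R) n : sum_f_R0 (fun k => a * u k) n = a * sum_f_R0 u n.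
Proof. induction n; simpl; [ring|]. rewrite IHn; ring. Qed.

Lemma binom_scalar c n (u : nat -> R) :
  sum_f_R0 (fun k => fco c (Datatypes.S n) k * u k) (Datatypes.S n) =
  c * sum_f_R0 (fun k => fco c n k * u k) n + sum_f_R0 (fun k => fco c n k * u (Datatypes.S k)) n.
Proof.
  rewrite sum_decomp.
  replace (sum_f_R0 (fun k => fco c (Datatypes.S n) (Datatypes.S k) * u (Datatypes.S k)) n)
    with (c * sum_f_R0 (fun k => fco c n (Datatypes.S k) * u (Datatypes.S k)) n
          + sum_f_R0 (fun k => fco c n k * u (Datatypes.S k)) n).
  2:{ rewrite <- sum_scal', <- sum_plus'. apply sum_eq; intros; rewrite fco_rec; ring. }
  assert (Hlast : sum_f_R0 (fun k => fco c n k * u k) (Datatypes.S n) = sum_f_R0 (fun k => fco c n k * u k) n).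
  { simpl sum_f_R0 at 1. unfold fco at 2. rewrite bin_gt by lia. simpl. ring. }
  rewrite <- Hlast, sum_decomp.
  replace (fco c (Datatypes.S n) 0) with (c * fco c n 0) by (unfold fco; rewrite !bin_0, !Nat.sub_0_r; simpl; ring).
  ring.
Qed.

Lemma Niter_binom {X} (q : X -> X -> R) nb S c g n x : c <> 0 ->
  c ^ n * Niter q nb S c n g x = sum_f_R0 (fun k => fco c n k * Liter q nb S k g x) n.
Proof.
  intro Hc. revert x; induction n as [|n IH]; intro x.
  - simpl. unfold fco; simpl. ring.
  - rewrite binom_scalar. rewrite Niter_S. unfold Nop at 1.
    assert (E : c ^ Datatypes.S n * (Niter q nb S c n g x + lapS q nb S (Niter q nb S c n g) x / c)
      = c * (c ^ n * Niter q nb S c n g x) + lapS q nb S (fun y => c ^ n * Niter q nb S c n g y) x).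
    { rewrite lapS_scal. simpl. field. auto. }
    rewrite E, IH.
    replace (fun y => c ^ n * Niter q nb S c n g y) with
      (fun y => sum_f_R0 (fun k => fco c n k * Liter q nb S k g y) n)
      by (apply functional_extensionality; intro; rewrite IH; reflexivity).
    rewrite lapS_sum. reflexivity.
Qed.

Lemma cauchy_term {X} (q : X -> X -> R) nb S c t g x n : c <> 0 ->
  sum_f_R0 (fun k => heat_term q nb S t g x k * ((c * t) ^ (n - k) / INR (fact (n - k)))) n
  = (c * t) ^ n / INR (fact n) * Niter q nb S c n (fun y => ind S y * g y) x.
Proof.
  intro Hc.
  assert (E : (c * t) ^ n / INR (fact n) * Niter q nb S c n (fun y => ind S y * g y) x
    = t ^ n / INR (fact n) * (c ^ n * Niter q nb S c n (fun y => ind S y * g y) x)).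
  { rewrite Rpow_mult_distr. unfold Rdiv. ring. }
  rewrite E, Niter_binom by auto. rewrite <- sum_scal'. apply sum_eq. intros k Hk.
  unfold heat_term, fco, Liter.
  set (L := Nat.iter k (lapS q nb S) (fun y => ind S y * g y) x).
  assert (Ht : t ^ n = t ^ k * t ^ (n - k)) by (rewrite <- pow_add; f_equal; lia).
  assert (Hf : INR (fact n) = INR (bin n k) * INR (fact k) * INR (fact (n - k)))
    by (rewrite <- !mult_INR, bin_fact by auto; reflexivity).
  pose proof (INR_fact_neq_0 k). pose proof (INR_fact_neq_0 (n - k)).
  assert (INR (bin n k) <> 0).
  { intro Hz. pose proof (INR_fact_neq_0 n) as Hn. rewrite Hf, Hz in Hn. apply Hn; ring. }
  rewrite Ht, Hf, Rpow_mult_distr. field. repeat split; auto.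
Qed.

Lemma exp_series x : is_series (fun n => x ^ n / INR (fact n)) (exp x).
Proof.
  unfold exp; destruct (exist_exp x) as [l Hl]; simpl.
  apply is_series_ext with (fun i => / INR (fact i) * x ^ i).
  - intro; unfold Rdiv; apply Rmult_comm.
  - apply is_series_Reals; exact Hl.
Qed.

Lemma Rabs_pow_fact x n : Rabs (x ^ n / INR (fact n)) = Rabs x ^ n / INR (fact n).
Proof.
  rewrite Rabs_div by apply INR_fact_neq_0. rewrite RPow_abs.
  rewrite (Rabs_pos_eq (INR (fact n))) by apply pos_INR. reflexivity.
Qed.

Lemma exp_abs_series x : ex_series (fun n => Rabs (x ^ n / INR (fact n))).
Proof.
  exists (exp (Rabs x)). eapply is_series_ext; [|apply exp_series].
  intro n; rewrite Rabs_pow_fact; reflexivity.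
Qed.

Lemma unif {X} (q : X -> X -> R) nb S c t g x G :
  (forall a b, 0 <= q a b) -> good_c q nb S c -> (forall y, Rabs (g y) <= G) ->
  exists H, infinite_sum (heat_term q nb S t g x) H /\
    infinite_sum (fun n => (c * t) ^ n / INR (fact n) * Niter q nb S c n (fun y => ind S y * g y) x)
                 (exp (c * t) * H).
Proof.
  intros Hq Hc Hg.
  assert (HG : 0 <= G) by (eapply Rle_trans; [apply Rabs_pos|apply (Hg x)]).
  assert (HgS : forall y, Rabs (ind S y * g y) <= G).
  { intro y; destruct (ind_cases S y) as [[_ ->]|[_ ->]].
    - rewrite Rmult_1_l; auto.
    - rewrite Rmult_0_l, Rabs_R0; auto. }
  assert (Habs : ex_series (fun n => Rabs (heat_term q nb S t g x n))).
  { apply (@ex_series_le R_AbsRing R_CompleteNormedModule) with (b := fun n => G * ((Rabs t * (2 * c)) ^ n / INR (fact n))).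
    - intro n. change (norm (Rabs (heat_term q nb S t g x n))) with (Rabs (Rabs (heat_term q nb S t g x n))).
      rewrite Rabs_Rabsolu. unfold heat_term.
      rewrite Rabs_mult, Rabs_pow_fact.
      pose proof (Liter_bound q nb S c _ G n x Hq Hc HgS) as HL. unfold Liter in HL.
      rewrite Rpow_mult_distr.
      assert (0 <= Rabs t ^ n / INR (fact n)).
      { unfold Rdiv; apply Rmult_le_pos; [apply pow_le, Rabs_pos|].
        apply Rlt_le, Rinv_0_lt_compat, lt_0_INR, Factorial.lt_O_fact. }
      replace (G * (Rabs t ^ n * (2 * c) ^ n / INR (fact n))) with
        (Rabs t ^ n / INR (fact n) * ((2 * c) ^ n * G)) by (unfold Rdiv; ring).
      apply Rmult_le_compat_l; auto.
    - exists (G * exp (Rabs t * (2 * c))). apply (is_series_scal_l G _ _ (exp_series (Rabs t * (2 * c)))). }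
  pose proof (ex_series_Rabs _ Habs) as Hex.
  exists (Series (heat_term q nb S t g x)).
  pose proof (Series_correct _ Hex) as Ha.
  split; [apply is_series_Reals; exact Ha|].
  assert (Hcn : c <> 0) by (destruct Hc; lra).
  pose proof (is_series_mult _ _ _ _ Ha (exp_series (c * t)) Habs (exp_abs_series (c * t))) as Hm.
  apply is_series_Reals. rewrite (Rmult_comm (exp _)).
  eapply is_series_ext; [|exact Hm]. intro n. simpl. apply cauchy_term; auto.
Qed.


Lemma Niter_off {X} (q : X -> X -> R) nb S c j g x : ~ In x S -> Niter q nb S c j g x = g x.
Proof.
  intro Hx; induction j as [|j IH]; [reflexivity|].
  rewrite Niter_S; unfold Nop, lapS; rewrite ind_nin by auto. rewrite IH. unfold Rdiv; ring.
Qed.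

Lemma Niter_harm {X} (q : X -> X -> R) nb S c j g x : (forall y, lap q nb g y = 0) ->
  Niter q nb S c j g x = g x.
Proof.
  intro Hg; revert x; induction j as [|j IH]; intro x; [reflexivity|].
  rewrite Niter_S.
  replace (Niter q nb S c j g) with g by (apply functional_extensionality; intro; rewrite IH; auto).
  unfold Nop, lapS; rewrite Hg. unfold Rdiv; ring.
Qed.

Lemma oneF_bounds {X} (q : X -> X -> R) nb F c j x :
  (forall a b, 0 <= q a b) -> good_c q nb F c ->
  0 <= Niter q nb F c j (fun y => ind F y * 1) x <= 1.
Proof.
  intros Hq Hc. split.
  - apply Niter_pos; auto. intro y; destruct (ind_cases F y) as [[_ ->]|[_ ->]]; lra.
  - apply Rle_trans with (Niter q nb F c j (fun _ => 1) x); [|rewrite Niter_const; lra]. apply Niter_mono; auto.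
    intro y; destruct (ind_cases F y) as [[_ ->]|[_ ->]]; lra.
Qed.

Definition uu {V} (q : V -> V -> R) nb F c j (x : V) : R :=
  1 - Niter q nb F c j (fun y => ind F y * 1) x.

Lemma couple_lower {V : Type} (q : V -> V -> R) nb qt nbt (F : list V) c j z :
  (forall a b, 0 <= q a b) -> (forall a b, 0 <= qt a b) ->
  (forall (f : V -> R) (x y : V),
    lap qt nbt (fun z => f (fst z)) (x, y) = lap q nb f x /\
    lap qt nbt (fun z => f (snd z)) (x, y) = lap q nb f y) ->
  good_c q nb F c -> good_c qt nbt (list_prod F F) c ->
  ind (list_prod F F) z * (1 - uu q nb F c j (fst z) - uu q nb F c j (snd z))
    <= Niter qt nbt (list_prod F F) c j (fun w => ind (list_prod F F) w * 1) z.
Proof.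
  intros Hq Hqt Hcp HcF HcS. set (S := list_prod F F).
  assert (Hpos : forall j z, 0 <= Niter qt nbt S c j (fun w => ind S w * 1) z).
  { intros; apply Niter_pos; auto. intro y; destruct (ind_cases S y) as [[_ ->]|[_ ->]]; lra. }
  revert z; induction j as [|j IH]; intro z.
  - destruct z as [x y]. simpl. unfold uu; simpl.
    destruct (ind_cases S (x, y)) as [[Hin ->]|[_ ->]]; [|lra].
    apply in_prod_iff in Hin. rewrite !ind_in by tauto. lra.
  - destruct (ind_cases S z) as [[Hin Hi]|[_ ->]]; [|rewrite Rmult_0_l; apply Hpos].
    rewrite Hi, Rmult_1_l. destruct z as [x y]. pose proof Hin as Hxy. apply in_prod_iff in Hxy.
    set (k := fun w : V * V => 1 - uu q nb F c j (fst w) - uu q nb F c j (snd w)).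
    assert (Hk : forall w, k w <= Niter qt nbt S c j (fun w => ind S w * 1) w).
    { intro w. eapply Rle_trans; [|apply IH].
      destruct (ind_cases S w) as [[_ ->]|[Hw ->]]; [unfold k; lra|].
      destruct w as [a b]. unfold k, uu; simpl.
      assert (~ In a F \/ ~ In b F) as [Ha|Hb].
      { destruct (classic (In a F)); [|auto]. right; intro; apply Hw; apply in_prod_iff; auto. }
      - rewrite (Niter_off q nb F c j _ a Ha), ind_nin by auto.
        pose proof (oneF_bounds q nb F c j b Hq HcF). lra.
      - rewrite (Niter_off q nb F c j _ b Hb), ind_nin by auto.
        pose proof (oneF_bounds q nb F c j a Hq HcF). lra. }
    pose proof (Niter_mono qt nbt S c 1 _ _ (x, y) Hqt HcS Hk) as Hm. simpl in Hm.
    rewrite Niter_S. eapply Rle_trans; [|exact Hm].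
    unfold Nop, lapS. rewrite Hi.
    unfold k.
    rewrite (lap_minus qt nbt (fun w => 1 - uu q nb F c j (fst w)) (fun w => uu q nb F c j (snd w))).
    rewrite (lap_minus qt nbt (fun _ => 1) (fun w => uu q nb F c j (fst w))).
    rewrite lap_const.
    destruct (Hcp (uu q nb F c j) x y) as [E1 E2]. rewrite E1, E2.
    unfold uu at 1 2. simpl fst; simpl snd. rewrite !Niter_S. unfold Nop at 1 2. unfold lapS.
    rewrite !ind_in by tauto.
    unfold uu. rewrite !lap_minus, !lap_const. unfold Rdiv. lra.
Qed.

Lemma perj {V : Type} (q : V -> V -> R) nb qt nbt (F : list V) c j psi B x0 y0 :
  (forall a b, 0 <= q a b) -> (forall a b, 0 <= qt a b) ->
  (forall (f : V -> R) (x y : V),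
    lap qt nbt (fun z => f (fst z)) (x, y) = lap q nb f x /\
    lap qt nbt (fun z => f (snd z)) (x, y) = lap q nb f y) ->
  good_c q nb F c -> good_c qt nbt (list_prod F F) c ->
  (forall w, lap qt nbt psi w = 0) -> 0 <= B ->
  (forall z, psi z <= B * offdiag z) -> (forall z, psi z <= B) ->
  In x0 F -> In y0 F ->
  psi (x0, y0) <= B * Niter qt nbt (list_prod F F) c j (fun z => ind (list_prod F F) z * offdiag z) (x0, y0)
                 + B * (uu q nb F c j x0 + uu q nb F c j y0).
Proof.
  intros Hq Hqt Hcp HcF HcS Hh HB H1 H2 Hx Hy. set (S := list_prod F F).
  rewrite <- (Niter_harm qt nbt S c j psi (x0, y0) Hh).
  assert (Hle : forall z, psi z <= B * (ind S z * offdiag z) + B * (1 - ind S z * 1)).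
  { intro z; destruct (ind_cases S z) as [[_ ->]|[_ ->]].
    - specialize (H1 z); lra.
    - specialize (H2 z); lra. }
  eapply Rle_trans; [apply (Niter_mono qt nbt S c j _ _ (x0, y0) Hqt HcS Hle)|].
  rewrite Niter_plus, Niter_scal, Niter_scal, Niter_minus, Niter_const.
  pose proof (couple_lower q nb qt nbt F c j (x0, y0) Hq Hqt Hcp HcF HcS) as Hc.
  fold S in Hc. rewrite ind_in in Hc by (apply in_prod_iff; auto). simpl in Hc.
  nra.
Qed.


Lemma cv_const (a : R) : Un_cv (fun _ => a) a.
Proof. intros eps He; exists 0%nat; intros; unfold R_dist; rewrite Rminus_diag, Rabs_R0; lra. Qed.

Lemma isum_cv a l : infinite_sum a l <-> Un_cv (fun n => sum_f_R0 a n) l.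
Proof. split; intro H; exact H. Qed.

Lemma isum_plus a b la lb : infinite_sum a la -> infinite_sum b lb ->
  infinite_sum (fun n => a n + b n) (la + lb).
Proof.
  intros Ha Hb. rewrite isum_cv in *.
  replace (fun n => sum_f_R0 (fun n0 => a n0 + b n0) n) with (fun n => sum_f_R0 a n + sum_f_R0 b n)
    by (apply functional_extensionality; intro; rewrite sum_plus'; reflexivity).
  apply (CV_plus _ _ _ _ Ha Hb).
Qed.
Lemma isum_minus a b la lb : infinite_sum a la -> infinite_sum b lb ->
  infinite_sum (fun n => a n - b n) (la - lb).
Proof.
  intros Ha Hb. rewrite isum_cv in *.
  replace (fun n => sum_f_R0 (fun n0 => a n0 - b n0) n) with (fun n => sum_f_R0 a n - sum_f_R0 b n).
  - apply (CV_minus _ _ _ _ Ha Hb).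
  - apply functional_extensionality; intro n; induction n; simpl; [ring|]. rewrite <- IHn; ring.
Qed.
Lemma isum_scal k a la : infinite_sum a la -> infinite_sum (fun n => k * a n) (k * la).
Proof.
  intros Ha. rewrite isum_cv in *.
  replace (fun n => sum_f_R0 (fun n0 => k * a n0) n) with (fun n => k * sum_f_R0 a n)
    by (apply functional_extensionality; intro; rewrite sum_scal'; reflexivity).
  apply (CV_mult _ _ _ _ (cv_const k) Ha).
Qed.
Lemma isum_le a b la lb : infinite_sum a la -> infinite_sum b lb -> (forall n, a n <= b n) -> la <= lb.
Proof.
  intros Ha Hb H. eapply Rle_cv_lim; [|exact Ha|exact Hb]. intro N; apply sum_Rle; auto.
Qed.
Lemma isum_ext a b l : (forall n, a n = b n) -> infinite_sum a l -> infinite_sum b l.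
Proof. intros H; replace b with a by (apply functional_extensionality; auto); auto. Qed.

Lemma exp_isum x : infinite_sum (fun n => x ^ n / INR (fact n)) (exp x).
Proof.
  unfold exp; destruct (exist_exp x) as [l Hl]; simpl.
  eapply isum_ext; [|exact Hl]. intro; simpl; unfold Rdiv; ring.
Qed.

Lemma peri {V : Type} (q : V -> V -> R) nb qt nbt (F : list V) c t psi B x0 y0 HA HBx HBy :
  (forall a b, 0 <= q a b) -> (forall a b, 0 <= qt a b) ->
  (forall (f : V -> R) (x y : V),
    lap qt nbt (fun z => f (fst z)) (x, y) = lap q nb f x /\
    lap qt nbt (fun z => f (snd z)) (x, y) = lap q nb f y) ->
  good_c q nb F c -> good_c qt nbt (list_prod F F) c -> 0 <= t ->
  (forall w, lap qt nbt psi w = 0) -> 0 <= B ->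
  (forall z, psi z <= B * offdiag z) -> (forall z, psi z <= B) ->
  In x0 F -> In y0 F ->
  infinite_sum (heat_term qt nbt (list_prod F F) t offdiag (x0, y0)) HA ->
  infinite_sum (heat_term q nb F t (fun _ => 1) x0) HBx ->
  infinite_sum (heat_term q nb F t (fun _ => 1) y0) HBy ->
  psi (x0, y0) <= B * HA + B * (2 - HBx - HBy).
Proof.
  intros Hq Hqt Hcp HcF HcS Ht Hh HB H1 H2 Hx Hy SA SBx SBy.
  destruct (unif qt nbt (list_prod F F) c t offdiag (x0, y0) 1 Hqt HcS) as [HA' [SA' UA]].
  { intro z; unfold offdiag; destruct (excluded_middle_informative _); rewrite ?Rabs_R0, ?Rabs_R1; lra. }
  destruct (unif q nb F c t (fun _ => 1) x0 1 Hq HcF) as [HBx' [SBx' UBx]].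
  { intro; rewrite Rabs_R1; lra. }
  destruct (unif q nb F c t (fun _ => 1) y0 1 Hq HcF) as [HBy' [SBy' UBy]].
  { intro; rewrite Rabs_R1; lra. }
  rewrite (uniqueness_sum _ _ _ SA SA'), (uniqueness_sum _ _ _ SBx SBx'), (uniqueness_sum _ _ _ SBy SBy').
  set (w := fun n => (c * t) ^ n / INR (fact n)).
  assert (Hw : forall n, 0 <= w n).
  { intro n; unfold w, Rdiv; apply Rmult_le_pos; [apply pow_le; destruct HcF; nra|].
    apply Rlt_le, Rinv_0_lt_compat, lt_0_INR, Factorial.lt_O_fact. }
  pose proof (exp_isum (c * t)) as Ew. fold w in Ew.
  pose proof (isum_scal (psi (x0, y0)) _ _ Ew) as L.
  pose proof (isum_scal (2 * B) _ _ Ew) as R2.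
  pose proof (isum_scal B _ _ UA) as RA.
  pose proof (isum_scal B _ _ UBx) as RX.
  pose proof (isum_scal B _ _ UBy) as RY.
  pose proof (isum_minus _ _ _ _ (isum_minus _ _ _ _ (isum_plus _ _ _ _ RA R2) RX) RY) as RR.
  pose proof (isum_le _ _ _ _ L RR) as Hle.
  assert (E : 0 < exp (c * t)) by apply exp_pos.
  assert (psi (x0, y0) * exp (c * t) <= (B * HA' + B * (2 - HBx' - HBy')) * exp (c * t)).
  { eapply Rle_trans; [|eapply Rle_trans; [apply Hle|right; ring]].
    - right; ring.
    - intro n. pose proof (perj q nb qt nbt F c n psi B x0 y0 Hq Hqt Hcp HcF HcS Hh HB H1 H2 Hx Hy) as P.
      unfold uu in P. pose proof (Hw n). change ((c * t) ^ n / INR (fact n)) with (w n). pose proof (Rmult_le_compat_r (w n) _ _ H P). nra. }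
  apply Rmult_le_reg_r in H; auto.
Qed.


Definition pick {V : Type} (e : V -> nat) (n : nat) : list V :=
  match excluded_middle_informative (exists z, e z = n) with
  | left H => [proj1_sig (constructive_indefinite_description _ H)]
  | right _ => []
  end.

Fixpoint Fx {V : Type} (e : V -> nat) (n : nat) : list V :=
  match n with
  | O => []
  | Datatypes.S n => Fx e n ++ pick e n
  end.

Lemma Fx_spec {V : Type} (e : V -> nat) : (forall x y, e x = e y -> x = y) ->
  forall n z, In z (Fx e n) <-> (e z < n)%nat.
Proof.
  intros He n; induction n as [|n IH]; intro z; simpl; [split; [tauto|lia]|].
  rewrite in_app_iff, IH. unfold pick.
  destruct (excluded_middle_informative _) as [H|H].
  - destruct (constructive_indefinite_description _ H) as [w Hw]; simpl.
    split.
    + intros [Hl|[<-|[]]]; lia.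
    + intro Hz. destruct (Nat.eq_dec (e z) n) as [E|E]; [|left; lia].
      right; left. apply He; lia.
  - split.
    + intros [Hl|[]]; lia.
    + intro Hz. destruct (Nat.eq_dec (e z) n) as [E|E]; [|left; lia].
      exfalso; apply H; eauto.
Qed.

Definition csum {X} (f : X -> R) (l : list X) := fold_right (fun y acc => f y + acc) 0 l.

Lemma good_c_make {X} (q : X -> X -> R) nb (S : list X) a :
  (forall a b, 0 <= q a b) -> 0 <= a -> good_c q nb S (1 + a + csum (deg q nb) S).
Proof.
  intros Hq Ha. pose proof (fold_nonneg (deg q nb) S (fun y => deg_nonneg q nb y Hq)).
  split; [unfold csum in *; lra|]. intros x Hx.
  pose proof (fold_ge (deg q nb) S x (fun y => deg_nonneg q nb y Hq) Hx). unfold csum in *; lra.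
Qed.

Lemma main_le (V : Type) (q : V -> V -> R) (nb : V -> list V)
  (qt : V * V -> V * V -> R) (nbt : V * V -> list (V * V)) :
  is_graph q nb -> stoch_complete q nb ->
  is_coupling q nb qt nbt ->
  (exists p : R -> V * V -> R,
      (forall t z, 0 <= t -> heat qt nbt t offdiag z (p t z)) /\
      (forall z eps, 0 < eps -> exists T, forall t, T <= t -> Rabs (p t z) < eps)) ->
  forall phi : V -> R,
    (exists C, forall x, Rabs (phi x) <= C) ->
    (forall x, lap q nb phi x = 0) ->
    forall x0 y0, phi x0 - phi y0 <= 0.
Proof.
  intros [[e He] [Hq _]] Hsc [[_ [Hqt _]] Hcp] [p [Hp Hdec]] phi [M HM] Hharm x0 y0.
  set (psi := fun z : V * V => phi (fst z) - phi (snd z)).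
  assert (Hpsi : forall w, lap qt nbt psi w = 0).
  { intros [x y]. unfold psi. rewrite lap_minus.
    destruct (Hcp phi x y) as [E1 E2]. rewrite E1, E2, !Hharm; ring. }
  set (B := 2 * M).
  assert (HM0 : 0 <= M) by (eapply Rle_trans; [apply Rabs_pos|apply (HM x0)]).
  assert (HB : 0 <= B) by (unfold B; lra).
  assert (Hpb : forall z, psi z <= B).
  { intro z; unfold psi, B. pose proof (HM (fst z)); pose proof (HM (snd z)).
    pose proof (Rle_abs (phi (fst z))). pose proof (Rle_abs (- phi (snd z))).
    rewrite Rabs_Ropp in H2. lra. }
  assert (Hpo : forall z, psi z <= B * offdiag z).
  { intro z; unfold offdiag; destruct (excluded_middle_informative _) as [E|E].
    - unfold psi; rewrite E; lra.
    - rewrite Rmult_1_r; auto. }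
  destruct (Rle_lt_dec (psi (x0, y0)) 0) as [Hle|Hgt]; [exact Hle|exfalso].
  set (delta := psi (x0, y0)) in *.
  destruct (Hdec (x0, y0) (delta / (B + 1))) as [T HT].
  { apply Rdiv_lt_0_compat; lra. }
  set (t := Rmax T 0).
  assert (Ht0 : 0 <= t) by apply Rmax_r.
  assert (HpT : Rabs (p t (x0, y0)) < delta / (B + 1)) by (apply HT, Rmax_l).
  set (F := Fx e). pose proof (Fx_spec e He) as HF.
  set (E := fun i => list_prod (F i) (F i)).
  assert (exF : exhaustion F).
  { split.
    - intros i y Hy. apply HF in Hy; apply HF; lia.
    - intro y; exists (Datatypes.S (e y)); apply HF; lia. }
  assert (exE : exhaustion E).
  { split.
    - intros i [x y] Hy. apply in_prod_iff in Hy. apply in_prod_iff.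
      destruct Hy as [H1 H2]; apply HF in H1; apply HF in H2; split; apply HF; lia.
    - intros [x y]; exists (Datatypes.S (Nat.max (e x) (e y))). apply in_prod_iff; split; apply HF; lia. }
  destruct (Hp t (x0, y0) Ht0 E exE) as [a [Sa Ca]].
  destruct (Hsc t x0 Ht0 F exF) as [bx [Sbx Cbx]].
  destruct (Hsc t y0 Ht0 F exF) as [by_ [Sby Cby]].
  set (i0 := Datatypes.S (Nat.max (e x0) (e y0))).
  assert (Hi : forall i, (i0 <= i)%nat -> delta <= B * a i + B * (2 - bx i - by_ i)).
  { intros i Hi.
    set (c := 1 + csum (deg qt nbt) (E i) + csum (deg q nb) (F i)).
    assert (HcF : good_c q nb (F i) c).
    { unfold c. apply good_c_make; auto. apply fold_nonneg. intro; apply deg_nonneg; auto. }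
    assert (HcS : good_c qt nbt (E i) c).
    { unfold c. replace (1 + csum (deg qt nbt) (E i) + csum (deg q nb) (F i))
        with (1 + csum (deg q nb) (F i) + csum (deg qt nbt) (E i)) by ring.
      apply good_c_make; auto. apply fold_nonneg. intro; apply deg_nonneg; auto. }
    apply (peri q nb qt nbt (F i) c t psi B x0 y0); auto; try (apply HF; unfold i0 in Hi; lia).
    exact (Sa i). }
  assert (Cr : Un_cv (fun i => B * a i + B * (2 - bx i - by_ i)) (B * p t (x0, y0) + B * (2 - 1 - 1))).
  { apply CV_plus; apply CV_mult; try apply cv_const; auto.
    apply CV_minus; [apply CV_minus; [apply cv_const|]|]; auto. }
  assert (Hlt : B * p t (x0, y0) < delta).
  { pose proof (Rle_abs (p t (x0, y0))).
    assert (B * Rabs (p t (x0, y0)) <= B * (delta / (B + 1))) by (apply Rmult_le_compat_l; lra).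
    assert (B * (delta / (B + 1)) < delta).
    { apply (Rmult_lt_reg_r (B + 1)); [lra|]. unfold Rdiv. field_simplify; nra. }
    nra. }
  destruct (Cr (delta - B * p t (x0, y0))) as [N HN]; [lra|].
  specialize (HN (Nat.max N i0) ltac:(lia)). specialize (Hi (Nat.max N i0) ltac:(lia)).
  unfold R_dist in HN. apply Rabs_def2 in HN. lra.
Qed.


Theorem mainTheorem14 (V : Type) (q : V -> V -> R) (nb : V -> list V)
  (qt : V * V -> V * V -> R) (nbt : V * V -> list (V * V)) :
  is_graph q nb -> reversible q -> stoch_complete q nb ->
  is_coupling q nb qt nbt ->
  (exists p : R -> V * V -> R,
      (forall t z, 0 <= t -> heat qt nbt t offdiag z (p t z)) /\
      (forall z eps, 0 < eps -> exists T, forall t, T <= t -> Rabs (p t z) < eps)) ->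
  forall phi : V -> R,
    (exists C, forall x, Rabs (phi x) <= C) ->
    (forall x, lap q nb phi x = 0) ->
    forall x y, phi x = phi y.
Proof.
  intros Hg _ Hsc Hc Hp phi Hb Hh x y.
  pose proof (main_le V q nb qt nbt Hg Hsc Hc Hp phi Hb Hh x y).
  pose proof (main_le V q nb qt nbt Hg Hsc Hc Hp phi Hb Hh y x).
  lra.
Qed.
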